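(* If a twice-marked graph $(G,u,v)$ has torsion order $2$ and every divisor on $G$ is submodular, then $(G,u,v)$ has $2$-general transmission.
   Context: A graph is a finite, connected, loopless multigraph (parallel edges allowed); its genus is $g=|E(G)|-|V(G)|+1$. A divisor is an element of the free abelian group on $V(G)$. Linear equivalence $\sim$ is generated by chip-firing (firing $w$ subtracts $\mathrm{val}(w)$ chips from $w$ and adds to each other vertex the number of edges joining it to $w$). The rank $r(D)$ is $-1$ if $D$ is not equivalent to an effective divisor, else the largest $r\ge0$ such that $D-E$ is equivalent to an effective divisor for every effective $E$ of degree $r$. $\delta(P)$ is $1$ if $P$ holds and $0$ otherwise. A twice-marked graph $(G,u,v)$ is a graph with two chosen vertices; its torsion order is the least $k\ge1$ with $ku\sim kv$. A twist of $D$ is $D+au+bv$. $\Delta(D)=r(D)-r(D-u)-r(D-v)+r(D-u-v)$. $D$ is submodular if $\Delta(D')\ge0$ for all twists $D'$. If $D$ is submodular, its transmission permutation $\tau^{u,v}_D$ is the unique bijection $\mathbb Z\to\mathbb Z$ with $\delta(\tau^{u,v}_D(b)=a)=\Delta(D+au-bv)$ for all $a,b$. An inversion of a bijection $\tau$ is a pair $(a,b)$ with $a<b$, $\tau(a)>\tau(b)$; two inversions $(a,b),(a',b')$ are $k$-equivalent if $a-a'=b-b'\equiv0\pmod k$; $\mathrm{inv}_k(\tau)$ is the number of classes. A genus-$g$ twice-marked graph has $k$-general transmission if $ku\sim kv$, every divisor is submodular, and $\mathrm{inv}_k(\tau^{u,v}_D)\le g$ for every divisor $D$. *)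

(* Defs.v *)
From mathcomp Require Import all_boot all_order all_algebra.
From mathcomp Require Import boolp.
Set Implicit Arguments. Unset Strict Implicit. Unset Printing Implicit Defensive.
Import Order.TTheory GRing.Theory Num.Theory.
Local Open Scope ring_scope.

Section ChipFiring.
Variable V : finType.
(* m x y = number of edges between x and y *)
Variable m : V -> V -> nat.

Definition is_graph : Prop :=
  [/\ forall x y, m x y = m y x,
      forall x, m x x = 0%N &
      forall x y, connect [rel a b | (0 < m a b)%N] x y].

Definition num_edges : nat := ((\sum_x \sum_y m x y) %/ 2)%N.

Definition genus : int := (num_edges%:Z - #|V|%:Z + 1).

Local Notation divisor := {ffun V -> int}.

Definition chip (w : V) : divisor := [ffun x => ((x == w) : nat)%:Z].

Definition valence (w : V) : nat := (\sum_x m w x)%N.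

Definition fire (w : V) : divisor :=
  [ffun x => (m w x)%:Z - (if x == w then (valence w)%:Z else 0)].

Definition lin_equiv (D D' : divisor) : Prop :=
  exists f : V -> int, D' = D + \sum_w fire w *~ f w.

Definition effective (D : divisor) : Prop := forall x, 0 <= D x.

Definition deg (D : divisor) : int := \sum_x D x.

Definition equiv_effective (D : divisor) : Prop :=
  exists E, effective E /\ lin_equiv D E.

Definition rank_ge (D : divisor) (r : nat) : Prop :=
  forall E, effective E -> deg E = r%:Z -> equiv_effective (D - E).

(* r(D) = -1 if D is not equivalent to an effective divisor, else the largest r
   with rank_ge D r; such r never exceeds deg D, hence the bounded max. *)
Definition rank (D : divisor) : int :=
  if `[< equiv_effective D >] then
    (\max_(r < `|deg D|.+1 | `[< rank_ge D r >]) (r : nat))%:Z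
  else -1.

Definition Delta (u v : V) (D : divisor) : int :=
  rank D - rank (D - chip u) - rank (D - chip v) + rank (D - chip u - chip v).

Definition submodular (u v : V) (D : divisor) : Prop :=
  forall a b : int, 0 <= Delta u v (D + chip u *~ a + chip v *~ b).

Definition is_transmission_perm (u v : V) (D : divisor) (tau : int -> int) : Prop :=
  bijective tau /\
  forall a b : int, ((tau b == a) : nat)%:Z = Delta u v (D + chip u *~ a - chip v *~ b).

Definition torsion_order (u v : V) (k : nat) : Prop :=
  [/\ (0 < k)%N,
      lin_equiv (chip u *+ k) (chip v *+ k) &
      forall j : nat, (0 < j)%N -> (j < k)%N ->
        ~ lin_equiv (chip u *+ j) (chip v *+ j)].

End ChipFiring.

Definition is_inversion (tau : int -> int) (p : int * int) : Prop :=
  p.1 < p.2 /\ tau p.2 < tau p.1.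

Definition k_equiv (k : nat) (p q : int * int) : Prop :=
  p.1 - q.1 = p.2 - q.2 /\ (k%:Z %| p.1 - q.1)%Z.

(* inv_k(tau) <= n : the k-equivalence classes of inversions of tau are at most n,
   i.e. some n inversions represent every class *)
Definition inv_k_le (k : nat) (tau : int -> int) (n : int) : Prop :=
  exists s : seq (int * int),
    (size s)%:Z <= n /\ (forall q, q \in s -> is_inversion tau q) /\
    forall p, is_inversion tau p -> exists2 q, q \in s & k_equiv k p q.

Definition general_transmission (V : finType) (m : V -> V -> nat) (u v : V) (k : nat) : Prop :=
  [/\ lin_equiv m (chip u *+ k) (chip v *+ k),
      forall D : {ffun V -> int}, submodular m u v D &
      forall D : {ffun V -> int}, exists tau,
        is_transmission_perm m u v D tau /\ inv_k_le k tau (genus m)].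

(* Main.v *)
Require Import Defs.
From mathcomp Require Import all_boot all_order all_algebra.
From mathcomp Require Import boolp zify ring.
Set Implicit Arguments. Unset Strict Implicit. Unset Printing Implicit Defensive.
Import Order.TTheory GRing.Theory Num.Theory.

Section Main.
Local Open Scope ring_scope.
Variable V : finType.
Variable m : V -> V -> nat.
Hypothesis msym : forall x y, m x y = m y x.
Hypothesis mloop : forall x, m x x = 0%N.

Local Notation divisor := {ffun V -> int}.
Implicit Types (D E F : divisor) (w x y : V).

Lemma PoszSum (I : Type) (r : seq I) (P : pred I) (F : I -> nat) :
  Posz (\sum_(i <- r | P i) F i)%N = \sum_(i <- r | P i) (F i)%:Z.
Proof. by apply: (big_morph Posz PoszD). Qed.

Lemma degD (D E : divisor) : deg (D + E) = deg D + deg E.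
Proof. by rewrite /deg -big_split; apply: eq_bigr => x _; rewrite ffunE. Qed.
Lemma degN (D : divisor) : deg (- D) = - deg D.
Proof. by rewrite /deg -sumrN; apply: eq_bigr => x _; rewrite ffunE. Qed.
Lemma degB (D E : divisor) : deg (D - E) = deg D - deg E.
Proof. by rewrite degD degN. Qed.
Lemma degMz (D : divisor) a : deg (D *~ a) = deg D * a.
Proof. by rewrite /deg mulr_suml; apply: eq_bigr => x _; rewrite ffunMzE mulrzz. Qed.
Lemma degMn (D : divisor) (n : nat) : deg (D *+ n) = deg D *+ n.
Proof. by rewrite /deg -sumrMnl; apply: eq_bigr => x _; rewrite ffunMnE. Qed.
Lemma deg_chip w : deg (chip w) = 1.
Proof.
rewrite /deg (bigD1 w) //= big1 ?addr0; first by rewrite ffunE eqxx.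
by move=> x /negbTE xw; rewrite ffunE xw.
Qed.
Lemma deg_sum (I : Type) (r : seq I) (F : I -> divisor) :
  deg (\sum_(i <- r) F i) = \sum_(i <- r) deg (F i).
Proof.
elim: r => [|i r IH]; first by rewrite !big_nil /deg big1 // => x _; rewrite ffunE.
by rewrite !big_cons degD IH.
Qed.
Lemma deg_fire w : deg (fire m w) = 0.
Proof.
rewrite /deg (bigD1 w) //= ffunE eqxx mloop /= add0r.
rewrite (eq_bigr (fun x => (m w x)%:Z)); last by move=> x /negbTE xw; rewrite ffunE xw subr0.
rewrite /valence (bigD1 w) //= mloop add0n.
by rewrite PoszSum addNr.
Qed.

Lemma lin_equiv_deg D E : lin_equiv m D E -> deg E = deg D.
Proof.
case=> f ->; rewrite degD deg_sum big1 ?addr0 // => w _.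
by rewrite degMz deg_fire mul0r.
Qed.
Lemma lin_equiv_refl D : lin_equiv m D D.
Proof. by exists (fun _ => 0); rewrite big1 ?addr0 // => w _; rewrite mulr0z. Qed.
Lemma lin_equiv_sym D E : lin_equiv m D E -> lin_equiv m E D.
Proof.
case=> f ->; exists (fun w => - f w).
rewrite -addrA -big_split /= big1 ?addr0 // => w _.
by rewrite mulrNz subrr.
Qed.
Lemma lin_equiv_trans D E F : lin_equiv m D E -> lin_equiv m E F -> lin_equiv m D F.
Proof.
case=> f -> [h ->]; exists (fun w => f w + h w).
by rewrite -addrA -big_split /=; congr (_ + _); apply: eq_bigr => w _; rewrite mulrzDr.
Qed.
Lemma lin_equivD D E F : lin_equiv m D E -> lin_equiv m (D + F) (E + F).
Proof. by case=> f ->; exists f; rewrite addrAC. Qed.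


Ltac norm_int :=
  let ile := match constr:(((0:int) <= 0)) with @Order.le _ ?i _ _ => i end in
  let ilt := match constr:(((0:int) < 0)) with @Order.lt _ ?i _ _ => i end in
  repeat match goal with
  | H : context [@Order.le ?d ?i ?a ?b] |- _ =>
      tryif constr_eq i ile then fail else change (@Order.le d i a b) with (@Order.le d ile a b) in H
  | H : context [@Order.lt ?d ?i ?a ?b] |- _ =>
      tryif constr_eq i ilt then fail else change (@Order.lt d i a b) with (@Order.lt d ilt a b) in H
  | |- context [@Order.le ?d ?i ?a ?b] =>
      tryif constr_eq i ile then fail else change (@Order.le d i a b) with (@Order.le d ile a b)
  | |- context [@Order.lt ?d ?i ?a ?b] =>
      tryif constr_eq i ilt then fail else change (@Order.lt d i a b) with (@Order.lt d ilt a b)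
  end.
Ltac gen_ff := repeat match goal with
  | |- context [@fun_of_fin ?V ?T ?p ?F ?x] =>
      let a := fresh "a" in let e := fresh "e" in
      (have [a e] : exists a : int, @fun_of_fin V T p F x = a by eexists);
      rewrite e; clear e
  | |- context [@bigop.body ?R ?I ?idx ?r ?F] =>
      let a := fresh "a" in let e := fresh "e" in
      (have [a e] : exists a : int, @bigop.body R I idx r F = a by eexists);
      rewrite e; clear e
  end.
Ltac rev_int := repeat match goal with
  | H : is_true _ |- _ => revert H
  | H : @eq int _ _ |- _ => revert H
  end.
Ltac lia' := rev_int; norm_int; gen_ff; intros; lia.
Ltac nia' := rev_int; norm_int; gen_ff; intros; nia.

Ltac ffs := apply/ffunP => ?; rewrite !(ffunE, ffunMzE, ffunMnE).

Lemma eventually2 (f : nat -> int) (L : int) :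
  (forall n, f n.+1 <= f n + 1) -> (forall n, n%:Z + L <= f n) ->
  exists N, f N.+1 = f N + 1 /\ f N.+2 = f N.+1 + 1.
Proof.
move=> hs hl.
have ex : exists k, `[< exists n, absz ((f n - n%:Z - L)%R) = k >].
  by exists (absz ((f 0%N - 0%:Z - L)%R)); apply/asboolP; exists 0%N.
case: (ex_minnP ex) => k /asboolP [N hN] hmin.
have m1 : (k <= absz ((f N.+1 - N.+1%:Z - L)%R))%N by apply: hmin; apply/asboolP; exists N.+1.
have m2 : (k <= absz ((f N.+2 - N.+2%:Z - L)%R))%N by apply: hmin; apply/asboolP; exists N.+2.
have := hs N; have := hs N.+1; have := hl N; have := hl N.+1; have := hl N.+2.
move: hN m1 m2; exists N; lia'.
Qed.

Lemma mono_int (phi : int -> int) : (forall x : int, phi (x - 1) <= phi x) ->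
  forall x y : int, x <= y -> phi x <= phi y.
Proof.
move=> hm x y hxy.
have [n ->] : exists n : nat, y = x + n%:Z by exists `|y - x|%N; lia'.
elim: n => [|n IH]; first by rewrite addr0.
apply: le_trans IH _; have := hm (x + n.+1%:Z).
by have -> : x + n.+1%:Z - 1 = x + n%:Z by lia'.
Qed.

Lemma thresh (phi : int -> int) lo hi : lo <= hi -> phi lo = 0 -> phi hi = 1 ->
  (forall x : int, 0 <= phi x <= 1) -> exists x : int, phi (x - 1) = 0 /\ phi x = 1.
Proof.
move=> hlh h0 h1 hb.
have [n hn] : exists n : nat, hi = lo + n%:Z by exists `|hi - lo|%N; lia'.
elim: n hi hn h1 {hlh} => [|n IH] hi hn h1; first by move: h0 h1; rewrite hn addr0 => ->.
have := hb (hi - 1); case: (eqVneq (phi (hi - 1)) 0) => [e|ne] _; first by exists hi.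
apply: (IH (hi - 1)); first by rewrite hn; lia'.
by have := hb (hi - 1); move: ne => /eqP; lia'.
Qed.

Lemma thresh_uniq (phi : int -> int) : (forall x : int, phi (x - 1) <= phi x) ->
  forall x y : int, phi (x - 1) = 0 -> phi x = 1 -> phi (y - 1) = 0 -> phi y = 1 -> x = y.
Proof.
move=> hm x y hx0 hx1 hy0 hy1.
case: (ltrgtP x y) => // hxy; exfalso.
  by have := mono_int hm (x := x) (y := y - 1); rewrite hx1 hy0; lia'.
by have := mono_int hm (x := y) (y := x - 1); rewrite hy1 hx0; lia'.
Qed.



Lemma count_bound (P : pred nat) N K : (forall k, P k -> (k < K)%N) -> (count P (iota 0 N) <= K)%N.
Proof.
move=> hP; suff : (count P (iota 0 N) <= minn N K)%N by move/leq_trans; apply; apply: geq_minr.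
elim: N => [|N IH]; first by [].
rewrite -addn1 iotaD count_cat /= add0n addn0.
case: (boolP (P N)) => hN /=.
  have := hP _ hN; move: IH; lia.
by move: IH; lia.
Qed.

Lemma comb1 (a b : nat) (g : int) : (a <= `|g|)%N -> (b <= 0)%N -> 0 <= g -> (a + b)%N%:Z <= g.
Proof. lia. Qed.

Lemma decomp2 (p : int) : exists i e : int, p = e + 2 * i /\ (e = 0 \/ e = 1).
Proof.
exists (p %/ 2)%Z, (p %% 2)%Z; split; first by rewrite {1}(divz_eq p 2) addrC mulrC.
have h0 : 0 <= (p %% 2)%Z by apply: modz_ge0.
have h1 : (p %% 2)%Z < 2 by apply: ltz_pmod.
move: h0 h1; move: (p %% 2)%Z => e; lia.
Qed.

Lemma eff_deg E : effective E -> 0 <= deg E.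
Proof. by move=> h; apply: sumr_ge0 => x _; apply: h. Qed.
Lemma eff_deg0 E : effective E -> deg E = 0 -> E = 0.
Proof.
move=> h h0; apply/ffunP => x; rewrite ffunE.
by apply: (psumr_eq0P (P := predT) (F := fun x => E x)) => // y _; apply: h.
Qed.
Lemma effD E F : effective E -> effective F -> effective (E + F).
Proof. by move=> h1 h2 x; rewrite ffunE addr_ge0. Qed.
Lemma eff_chip w : effective (chip w).
Proof. by move=> x; rewrite ffunE. Qed.
Lemma eff_chipn w n : effective (chip w *+ n).
Proof. by move=> x; rewrite ffunMnE ffunE mulrn_wge0. Qed.
Lemma eff0 : effective (0 : divisor).
Proof. by move=> x; rewrite ffunE. Qed.

Lemma ee_lin D D' : lin_equiv m D D' -> equiv_effective m D -> equiv_effective m D'.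
Proof.
move=> h [E [hE hDE]]; exists E; split => //.
exact: lin_equiv_trans (lin_equiv_sym h) hDE.
Qed.
Lemma ee_add D E : equiv_effective m D -> effective E -> equiv_effective m (D + E).
Proof.
move=> [F [hF hDF]] hE; exists (F + E); split; first exact: effD.
exact: lin_equivD.
Qed.
Lemma ee_deg D : equiv_effective m D -> 0 <= deg D.
Proof. by move=> [F [hF hDF]]; rewrite -(lin_equiv_deg hDF); exact: eff_deg. Qed.

Variable q : V.

Lemma rank_ge0 D : rank_ge m D 0 <-> equiv_effective m D.
Proof.
split=> [h|h E hE hd].
  have := h 0 eff0; rewrite subr0; apply.
  by rewrite /deg big1 // => x _; rewrite ffunE.
by rewrite (eff_deg0 hE hd) subr0.
Qed.
Lemma rank_geS D r : rank_ge m D r.+1 -> rank_ge m D r.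
Proof.
move=> h E hE hd.
have -> : D - E = (D - (E + chip q)) + chip q by rewrite opprD addrA subrK.
apply: ee_add (eff_chip q); apply: h; first exact: effD (eff_chip q).
by rewrite degD deg_chip hd -addn1 PoszD.
Qed.
Lemma rank_ge_le D r s : (r <= s)%N -> rank_ge m D s -> rank_ge m D r.
Proof.
move=> /subnKC <-; elim: (s - r)%N => [|k IH]; first by rewrite addn0.
by rewrite addnS => /rank_geS.
Qed.
Lemma rank_ge_deg D r : rank_ge m D r -> r%:Z <= deg D.
Proof.
move=> h; have hd : deg (chip q *+ r) = r%:Z by rewrite degMn deg_chip natz.
by have := ee_deg (h _ (eff_chipn q r) hd); rewrite degB hd subr_ge0.
Qed.
Lemma rank_geP D (r : nat) : (r%:Z <= rank m D) <-> rank_ge m D r.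
Proof.
rewrite /rank; case: asboolP => hD; last first.
  split=> // h; exfalso; apply: hD; apply/rank_ge0.
  exact: rank_ge_le h.
rewrite lez_nat; split=> h; last first.
  have hr : (r < `|deg D|.+1)%N by have := rank_ge_deg h; lia'.
  by apply: (@leq_bigmax_cond _ _ (fun i : 'I_ _ => nat_of_ord i) (Ordinal hr)); apply/asboolP.
apply: contrapT => hn.
case: r h hn => [|r] h hn; first by apply: hn; apply/rank_ge0.
move: h; apply/negP; rewrite -ltnNge ltnS; apply/bigmax_leqP => i /asboolP hi.
rewrite leqNgt; apply/negP => hir; apply: hn; exact: rank_ge_le hir hi.
Qed.
Lemma rank_m1 D : -1 <= rank m D.
Proof. by rewrite /rank; case: asboolP. Qed.
Lemma rank_le D1 D2 :
  (forall r : nat, rank_ge m D1 r -> rank_ge m D2 r) -> rank m D1 <= rank m D2.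
Proof.
move=> h; case: (ltrP (rank m D1) 0) => h0.
  have := rank_m1 D1; have := rank_m1 D2; lia'.
have [r hr] : exists r : nat, rank m D1 = r%:Z by exists `|rank m D1|%N; lia'.
by rewrite hr; apply/rank_geP; apply: h; apply/rank_geP; rewrite hr.
Qed.
Lemma rank_ge_lin D D' r : lin_equiv m D D' -> rank_ge m D r -> rank_ge m D' r.
Proof.
move=> hl h E hE hd; apply: ee_lin (h E hE hd).
exact: lin_equivD.
Qed.
Lemma rank_lin D D' : lin_equiv m D D' -> rank m D = rank m D'.
Proof.
move=> h; apply/eqP; rewrite eq_le !rank_le // => r; apply: rank_ge_lin => //.
exact: lin_equiv_sym.
Qed.
Lemma rank_neg D : deg D < 0 -> rank m D = -1.
Proof.
move=> h; rewrite /rank; case: asboolP => // /ee_deg; lia'.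
Qed.
Lemma rank_sub_le D w : rank m (D - chip w) <= rank m D.
Proof.
apply: rank_le => r h E hE hd.
have -> : D - E = (D - chip w - E) + chip w by rewrite addrAC subrK.
by apply: ee_add (eff_chip w); apply: h.
Qed.
Lemma rank_sub_ge D w : rank m D - 1 <= rank m (D - chip w).
Proof.
case: (ltrP (rank m D) 1) => h0.
  have := rank_m1 (D - chip w); lia'.
have [r hr] : exists r : nat, rank m D = r.+1%:Z by exists (`|rank m D| - 1)%N; lia'.
rewrite hr; have -> : r.+1%:Z - 1 = r%:Z by lia'.
apply/rank_geP => E hE hd.
have -> : D - chip w - E = D - (E + chip w) by rewrite opprD addrA addrAC.
have /rank_geP h : r.+1%:Z <= rank m D by rewrite hr.
apply: h; first exact: effD (eff_chip w).
by rewrite degD deg_chip hd -addn1 PoszD.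
Qed.

Lemma sum_delta (f : V -> int) w : \sum_x ((x == w) : nat)%:Z * f x = f w.
Proof.
rewrite (bigD1 w) //= eqxx mul1r big1 ?addr0 // => x /negbTE ->; by rewrite mul0r.
Qed.

Lemma sum_delta' (f : V -> int) w : \sum_x ((w == x) : nat)%:Z * f x = f w.
Proof. by rewrite -[RHS]sum_delta; apply: eq_bigr => x _; rewrite eq_sym. Qed.

Definition Sf (z : V -> int) (w : V) : int := \sum_x (m w x)%:Z * (z x - z w).

Lemma Sf_alt (z : V -> int) w :
  Sf z w = \sum_x (m w x)%:Z * z x - (valence m w)%:Z * z w.
Proof.
rewrite /Sf /valence PoszSum mulr_suml -sumrB; apply: eq_bigr => x _.
by rewrite mulrBr.
Qed.

Lemma lap_S (c : V -> int) x : (\sum_w fire m w *~ c w) x = Sf c x.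
Proof.
rewrite sum_ffunE Sf_alt.
have -> : \sum_w (fire m w *~ c w) x = \sum_w ((m w x)%:Z * c w - ((x == w) : nat)%:Z * ((valence m w)%:Z * c w)).
  apply: eq_bigr => w _; rewrite ffunMzE ffunE mulrzz mulrBl; congr (_ - _).
  by case: eqP => _; rewrite ?mul1r ?mul0r.
rewrite sumrB sum_delta'; congr (_ - _).
by apply: eq_bigr => w _; rewrite msym.
Qed.

Lemma lap_pair (c z : V -> int) :
  \sum_x (\sum_w fire m w *~ c w) x * z x = \sum_w c w * Sf z w.
Proof.
have -> : \sum_x (\sum_w fire m w *~ c w) x * z x =
   \sum_x \sum_w c w * ((m w x)%:Z * z x - ((x == w) : nat)%:Z * ((valence m w)%:Z * z x)).
  apply: eq_bigr => x _; rewrite sum_ffunE mulr_suml; apply: eq_bigr => w _.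
  rewrite ffunMzE ffunE mulrzz; case: eqP => [->|_]; rewrite ?mul1r ?mul0r; ring.
rewrite exchange_big /=; apply: eq_bigr => w _.
rewrite -mulr_sumr sumrB Sf_alt; congr (_ * (_ - _)).
by rewrite (sum_delta (fun x => (valence m w)%:Z * z x)).
Qed.


Hypothesis mconn : forall x y, connect [rel a b | (0 < m a b)%N] x y.

Lemma cut_edge (A : {set V}) a : a \in A -> q \notin A ->
  exists w0 x, [/\ w0 \in A, x \notin A & (0 < m w0 x)%N].
Proof.
move=> ha hq; have /connectP [p] := mconn a q.
elim: p a ha => [|y p IH] a ha /=; first by move=> _ qa; rewrite qa ha in hq.
move=> /andP[ray pth] hl; case: (boolP (y \in A)) => hy; first exact: IH hy pth hl.
by exists a, y.
Qed.

Lemma potential_n n (A : {set V}) : #|A| = n -> q \notin A ->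
  exists (z : V -> int) (M : int), [/\ forall x, 0 <= z x <= M,
     forall x, x \notin A -> z x = M & forall w, w \in A -> 1 <= Sf z w].
Proof.
elim: n A => [|n IH] A hA hq.
  exists (fun _ => 0), 0; split => // w; by rewrite (cards0_eq hA) inE.
have [a ha] : exists a, a \in A by apply/set0Pn; apply/negP => /eqP h; rewrite h cards0 in hA.
have [w0 [x1 [hw0 hx1 hm]]] := cut_edge ha hq.
have hA' : #|A :\ w0| = n by move: hA; rewrite (cardsD1 w0) hw0; case.
have hq' : q \notin A :\ w0 by rewrite inE negb_and hq orbT.
have [z' [M' [hb hout hS]]] := IH _ hA' hq'.
have hM' : 0 <= M' by have /andP[h1 h2] := hb q; apply: le_trans h2.
set K := M' * (valence m w0)%:Z + 1.
have hK : 1 <= K by rewrite /K; nia'.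
exists (fun x => if x \in A then z' x else M' + K), (M' + K); split.
- move=> x; case: ifP => _; last by lia'.
  by have := hb x; lia'.
- by move=> x /negbTE ->.
move=> w hw; case: (eqVneq w w0) => [->|hne].
  rewrite /Sf hw0.
  have hzw0 : z' w0 = M' by apply: hout; rewrite !inE eqxx.
  rewrite hzw0.
  have : \sum_x ((m w0 x)%:Z * (- M') + ((x == x1) : nat)%:Z * K) <=
         \sum_x (m w0 x)%:Z * ((if x \in A then z' x else M' + K) - M').
    apply: ler_sum => x _; case: (eqVneq x x1) => [->|hx].
      rewrite (negbTE hx1) /=.
      have : (1 <= m w0 x1)%N by []. nia'.
    rewrite /= mul0r addr0; case: ifP => _; last by nia'.
    by have := hb x; nia'.
  apply: le_trans; rewrite big_split /= -mulr_suml (sum_delta (fun _ => K)) -PoszSum.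
  by rewrite /K /valence mulrN mulrC addrA addNr add0r.
have hw' : w \in A :\ w0 by rewrite !inE hne hw.
apply: le_trans (hS _ hw') _; rewrite /Sf hw; apply: ler_sum => x _.
case: ifP => hxA; first by [].
have -> : z' x = M' by apply: hout; rewrite !inE hxA andbF.
have := hb w; nia'.
Qed.


Lemma potential : exists (z : V -> int) (M : int), [/\ forall x, 0 <= z x <= M,
     z q = M & forall w, w != q -> 1 <= Sf z w].
Proof.
have hq : q \notin [set~ q] by rewrite !inE eqxx.
have [z [M [h1 h2 h3]]] := potential_n (erefl _) hq.
exists z, M; split => //; first by apply: h2.
by move=> w hw; apply: h3; rewrite !inE.
Qed.

Lemma Sf_scale (c : int) (z : V -> int) x : Sf (fun w => c * z w) x = c * Sf z x.
Proof. by rewrite /Sf mulr_sumr; apply: eq_bigr => y _; ring. Qed.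

Lemma norm_le_sum (F : divisor) x : - F x <= \sum_y `|F y|.
Proof.
rewrite (bigD1 x) //=.
have := ler_norm (- F x); rewrite normrN => h1; apply: le_trans h1 _; rewrite lerDl; apply: sumr_ge0 => i _; exact: normr_ge0.
Qed.

Lemma Sf_nonneg_out (c : V -> int) x : c x = 0 -> (forall y, 0 <= c y) -> 0 <= Sf c x.
Proof.
move=> h0 hc; rewrite /Sf; apply: sumr_ge0 => y _; rewrite h0 subr0.
by apply: mulr_ge0 => //; apply: hc.
Qed.

Section Reduced.
Variable F : divisor.
Variables (z : V -> int) (M : int).
Hypotheses (hzb : forall x, 0 <= z x <= M) (hzq : z q = M)
  (hzS : forall w, w != q -> 1 <= Sf z w).

Definition Good F' := lin_equiv m F F' /\ forall x, x != q -> 0 <= F' x.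
Definition Pz (F' : divisor) := \sum_x F' x * z x.

Lemma Pz_bound F' : Good F' -> Pz F' <= deg F * M.
Proof.
move=> [hl hp]; rewrite -(lin_equiv_deg hl) /deg mulr_suml /Pz.
apply: ler_sum => x _; case: (eqVneq x q) => [->|hx]; first by rewrite hzq.
have := hp x hx; have := hzb x; nia'.
Qed.

Definition kval F' : nat := absz ((deg F * M - Pz F')%R).

Lemma good_exists : exists F', Good F'.
Proof.
have [N hN hF] : exists2 N : int, 0 <= N & forall x, - F x <= N.
  exists (\sum_y `|F y|); last exact: norm_le_sum.
  by apply: sumr_ge0 => y _; apply: normr_ge0.
exists (F + \sum_w fire m w *~ (N * z w)); split; first by exists (fun w => N * z w).
move=> x hx; rewrite ffunE lap_S Sf_scale.
have h3 := ler_wpM2l hN (hzS hx); rewrite mulr1 in h3.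
have e1 : - F x <= N := hF x. have e2 : N <= N * Sf z x := h3.
suff H : 0 <= F x + N * Sf z x by exact: H. lia'.
Qed.

Lemma reduced_exists : exists F', Good F' /\ forall F'', Good F'' -> (kval F' <= kval F'')%N.
Proof.
have ex : exists k, `[< exists F', Good F' /\ kval F' = k >].
  by have [F' hF'] := good_exists; exists (kval F'); apply/asboolP; exists F'.
case: (ex_minnP ex) => k /asboolP [F' [hF' hk]] hmin.
exists F'; split => // F'' hF''; rewrite hk; apply: hmin; apply/asboolP; by exists F''.
Qed.

Lemma burn F' : Good F' -> (forall F'', Good F'' -> (kval F' <= kval F'')%N) ->
  forall B : {set V}, q \in B -> B != setT ->
  exists x, x \notin B /\ F' x < \sum_(y in B) (m x y)%:Z.
Proof.
move=> hG hmin B hqB hBT; apply: contrapT => hno.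
have hge : forall x, x \notin B -> \sum_(y in B) (m x y)%:Z <= F' x.
  move=> x hx; rewrite leNgt; apply/negP => hlt; apply: hno; by exists x.
set c := fun w => ((w \notin B) : nat)%:Z.
set F'' := F' + \sum_w fire m w *~ c w.
have hG'' : Good F''.
  split; first by apply: lin_equiv_trans hG.1 _; exists c.
  move=> x hx; rewrite ffunE lap_S; case: (boolP (x \in B)) => hxB.
    have := hG.2 x hx; have : 0 <= Sf c x.
      by apply: Sf_nonneg_out => [|y]; rewrite /c ?hxB.
    lia'.
  have -> : Sf c x = - \sum_(y in B) (m x y)%:Z.
    rewrite /Sf (big_mkcond (fun y => y \in B)) -sumrN; apply: eq_bigr => y _.
    rewrite /c hxB /=; case: (y \in B) => /=; lia'.
  have := hge x hxB; lia'.
have hP : Pz F' + 1 <= Pz F''.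
  rewrite /Pz /F''.
  have -> : \sum_x (F' + \sum_w fire m w *~ c w) x * z x =
     \sum_x F' x * z x + \sum_x (\sum_w fire m w *~ c w) x * z x.
    by rewrite -big_split; apply: eq_bigr => x _; rewrite ffunE mulrDl.
  rewrite lap_pair lerD2l.
  have [x0 hx0] : exists x0, x0 \notin B.
    apply: contrapT => hn; move/negP: hBT; apply; apply/eqP/setP => y.
    rewrite inE; apply: contrapT => /negP hy; apply: hn; by exists y.
  rewrite (bigD1 x0) //= {1}/c hx0 mul1r.
  have hx0q : x0 != q by apply: contraNneq hx0 => ->.
  have := hzS hx0q; have : 0 <= \sum_(i | i != x0) c i * Sf z i.
    apply: sumr_ge0 => w _; rewrite /c; case: (boolP (w \in B)) => hw /=; first by rewrite mul0r.
    rewrite mul1r; have hwq : w != q by apply: contraNneq hw => ->.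
    by have := hzS hwq; lia'.
  lia'.
have := hmin _ hG''; rewrite /kval.
have := Pz_bound hG; have := Pz_bound hG''; lia'.
Qed.


Lemma burn_ind F' : Good F' -> (forall F'', Good F'' -> (kval F' <= kval F'')%N) ->
  forall k, (k < #|V|)%N -> exists B : {set V}, [/\ q \in B, #|B| = k.+1 &
    2 * \sum_(y in B) (if y == q then 0 else F' y) <=
      \sum_(i in B) \sum_(j in B) (m i j)%:Z - 2 * k%:Z].
Proof.
move=> hG hmin; elim=> [|k IH] hk.
  exists [set q]; split; [by rewrite inE | by rewrite cards1 | ].
  by rewrite !big_set1 eqxx mloop.
have [B [hqB hB hI]] := IH (ltnW hk).
have hBT : B != setT.
  apply/negP => /eqP hBT; move: hk; rewrite -hB hBT cardsT ltnn //.
have [x [hxB hx]] := burn hG hmin hqB hBT.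
exists (x |: B); split.
- by rewrite !inE hqB orbT.
- by rewrite cardsU1 hxB hB.
have hxq : x != q by apply: contraNneq hxB => ->.
rewrite big_setU1 //= (negbTE hxq) big_setU1 //= big_setU1 //= mloop.
have -> : \sum_(i in B) \sum_(j in x |: B) (m i j)%:Z =
   \sum_(i in B) ((m x i)%:Z + \sum_(j in B) (m i j)%:Z).
  by apply: eq_bigr => i _; rewrite big_setU1 //= msym.
rewrite big_split /=.
move: hI hx; lia'.
Qed.

End Reduced.

Lemma sum_setT (f : V -> int) : \sum_(i in [set: V]) f i = \sum_i f i.
Proof. by apply: eq_bigl => i; rewrite in_setT. Qed.

Lemma riemann_eff (F : divisor) : genus m <= deg F -> equiv_effective m F.
Proof.
move=> hg.
have [z [M [hzb hzq hzS]]] := potential.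
have [F' [hG hmin]] := reduced_exists F hzq hzS.
have hV : (0 < #|V|)%N by apply/card_gt0P; exists q.
have [B [hqB hB hI]] := burn_ind hzb hzq hzS hG hmin (k := #|V|.-1) (ltac:(by rewrite ltn_predL)).
have hBT : B = setT.
  apply/eqP; rewrite eqEcard subsetT cardsT hB prednK //=; exact: leqnn.
rewrite hBT !sum_setT in hI.
have e : \sum_i \sum_(j in [set: V]) (m i j)%:Z = \sum_i \sum_j (m i j)%:Z.
  by apply: eq_bigr => i _; rewrite sum_setT.
rewrite e in hI; clear e.
have hS : \sum_i \sum_j (m i j)%:Z = ((\sum_i \sum_j m i j)%N)%:Z.
  by rewrite PoszSum; apply: eq_bigr => i _; rewrite PoszSum.
rewrite hS in hI; clear hS.
have hdeg : deg F' = F' q + \sum_y (if y == q then 0 else F' y).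
  rewrite /deg (bigD1 q) //= [X in _ = _ + X](bigD1 q) //= eqxx add0r; congr (_ + _).
  by apply: eq_bigr => y /negbTE ->.
have hdF : deg F' = deg F by apply: lin_equiv_deg; case: hG.
move: hg; rewrite /genus /num_edges => hg.
have hq : 0 <= F' q.
  move: hI hdeg hdF hg.
  move: (\sum_y (if y == q then 0 else F' y)) => X.
  move: (\sum_i \sum_j m i j)%N => s.
  lia'.
exists F'; split; last by case: hG.
by move=> x; case: (eqVneq x q) => [->//|hx]; apply: hG.2.
Qed.


Lemma rank_riemann (F : divisor) : deg F - genus m <= rank m F.
Proof.
case: (ltrP (deg F - genus m) 0) => h.
  by have := rank_m1 F; lia'.
have [r hr] : exists r : nat, deg F - genus m = r%:Z by exists `|deg F - genus m|%N; lia'.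
rewrite hr; apply/rank_geP => E hE hd; apply: riemann_eff.
by rewrite degB hd -hr; lia'.
Qed.

Lemma rank_le_deg (F : divisor) : 0 <= rank m F -> rank m F <= deg F.
Proof.
move=> h; have [r hr] : exists r : nat, rank m F = r%:Z by exists `|rank m F|%N; lia'.
rewrite hr; apply: rank_ge_deg; apply/rank_geP; by rewrite hr.
Qed.

Lemma genus_ge0 : 0 <= genus m.
Proof.
have h0 : deg (0 : divisor) = 0 by rewrite /deg big1 // => x _; rewrite ffunE.
have h1 : 0 <= rank m (0 : divisor).
  apply/(rank_geP _ 0); apply/rank_ge0; exists 0; split; [exact: eff0 | exact: lin_equiv_refl].
have := rank_riemann 0; have := rank_le_deg h1; rewrite h0; lia'.
Qed.


Section Trans.
Variables u v : V.
Hypothesis htor : lin_equiv m (chip u *+ 2) (chip v *+ 2).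
Variable D : divisor.
Hypothesis hsub : submodular m u v D.

Definition Dab (a b : int) : divisor := D + chip u *~ a - chip v *~ b.
Definition R a b := rank m (Dab a b).
Local Notation d := (deg D).
Local Notation gg := (genus m).

Lemma Dab_u a b : Dab a b - chip u = Dab (a - 1) b.
Proof. apply/ffunP => x; rewrite /Dab !(ffunE, ffunMzE) !mulrzz; ring. Qed.
Lemma Dab_v a b : Dab a b - chip v = Dab a (b + 1).
Proof. apply/ffunP => x; rewrite /Dab !(ffunE, ffunMzE) !mulrzz; ring. Qed.
Lemma deg_Dab a b : deg (Dab a b) = d + a - b.
Proof. by rewrite /Dab degB degD !degMz !deg_chip !mul1r. Qed.
Lemma Dab_tor a b : lin_equiv m (Dab (a + 2) b) (Dab a (b - 2)).
Proof.
have e1 : Dab (a + 2) b = chip u *+ 2 + Dab a b.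
  apply/ffunP => x; rewrite /Dab !(ffunE, ffunMzE, ffunMnE) !mulrzz; ring.
have e2 : Dab a (b - 2) = chip v *+ 2 + Dab a b.
  apply/ffunP => x; rewrite /Dab !(ffunE, ffunMzE, ffunMnE) !mulrzz; ring.
rewrite e1 e2; exact: lin_equivD.
Qed.
Lemma R_per a b : R (a + 2) (b + 2) = R a b.
Proof.
rewrite /R (rank_lin (Dab_tor a (b + 2))).
by have -> : b + 2 - 2 = b by lia'.
Qed.
Lemma Delta_R a b : Delta m u v (Dab a b) = R a b - R (a - 1) b - R a (b + 1) + R (a - 1) (b + 1).
Proof. by rewrite /Delta /R Dab_u Dab_v Dab_v. Qed.

Definition Dl a b := R a b - R (a - 1) b - R a (b + 1) + R (a - 1) (b + 1).
Definition ga a b := R a b - R (a - 1) b.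
Definition ha a b := R a b - R a (b + 1).
Ltac gen_one t := let a := fresh "a" in let e := fresh "e" in
  (have [a e] : exists a : int, t = a by eexists); rewrite e; clear e.
Ltac gen_tr := repeat match goal with
  | |- context [R ?a ?b] => gen_one (R a b)
  | |- context [ha ?a ?b] => gen_one (ha a b)
  | |- context [ga ?a ?b] => gen_one (ga a b)
  | |- context [Dl ?a ?b] => gen_one (Dl a b)
  end.
Ltac lia' ::= rev_int; norm_int; gen_ff; gen_tr; intros; lia.

Lemma Dl_ge0 a b : 0 <= Dl a b.
Proof.
rewrite /Dl -Delta_R; have := hsub a (- b).
suff -> : D + chip u *~ a + chip v *~ - b = Dab a b by [].
by apply/ffunP => x; rewrite /Dab !(ffunE, ffunMzE) !mulrzz; ring.
Qed.
Lemma ga01 a b : 0 <= ga a b <= 1.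
Proof.
rewrite /ga /R -Dab_u; have := rank_sub_le (Dab a b) u; have := rank_sub_ge (Dab a b) u; lia'.
Qed.
Lemma ha01 a b : 0 <= ha a b <= 1.
Proof.
rewrite /ha /R -Dab_v; have := rank_sub_le (Dab a b) v; have := rank_sub_ge (Dab a b) v; lia'.
Qed.
Lemma Dl_ga a b : Dl a b = ga a b - ga a (b + 1).
Proof. rewrite /Dl /ga; lia'. Qed.
Lemma Dl_ha a b : Dl a b = ha a b - ha (a - 1) b.
Proof. rewrite /Dl /ha; lia'. Qed.
Lemma R_neg a b : d + a - b < 0 -> R a b = -1.
Proof. by move=> h; rewrite /R rank_neg // deg_Dab. Qed.
Lemma R_riem a b : d + a - b - gg <= R a b.
Proof. by rewrite /R -deg_Dab; apply: rank_riemann. Qed.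
Lemma R_m1 a b : -1 <= R a b.
Proof. exact: rank_m1. Qed.
Lemma Dl_per a b : Dl (a + 2) (b + 2) = Dl a b.
Proof.
rewrite /Dl.
have -> : a + 2 - 1 = (a - 1) + 2 by lia'.
have -> : b + 2 + 1 = (b + 1) + 2 by lia'.
by rewrite !R_per.
Qed.


Lemma ha_mono b a : ha (a - 1) b <= ha a b.
Proof. have := Dl_ge0 a b; rewrite Dl_ha; lia'. Qed.
Lemma ga_mono a b : ga a (b + 1) <= ga a b.
Proof. have := Dl_ge0 a b; rewrite Dl_ga; lia'. Qed.
Lemma Dl_le1 a b : Dl a b <= 1.
Proof. rewrite Dl_ha; have := ha01 a b; have := ha01 (a - 1) b; lia'. Qed.
Lemma Dl1_ha a b : Dl a b = 1 <-> ha (a - 1) b = 0 /\ ha a b = 1.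
Proof. rewrite Dl_ha; have := ha01 a b; have := ha01 (a - 1) b; move=> h1 h2; split; lia'. Qed.
Lemma Dl1_ga a b : Dl a b = 1 <-> ga a b = 1 /\ ga a (b + 1) = 0.
Proof. rewrite Dl_ga; have := ga01 a b; have := ga01 a (b + 1); move=> h1 h2; split; lia'. Qed.

Lemma ga_ha a b : ha a b + ha a (b + 1) = ga a b + ga (a - 1) b.
Proof.
rewrite /ha /ga.
have -> : b + 1 + 1 = b + 2 by lia'.
have e : R a (b + 2) = R (a - 1 - 1) b.
  by rewrite -[RHS]R_per; congr (R _ _); lia'.
rewrite e; lia'.
Qed.

Lemma ex_col b : exists a, Dl a b == 1.
Proof.
set lo := b - d - 1.
have hlo : ha lo b = 0.
  rewrite /ha !R_neg //; rewrite /lo; lia'.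
have hs : forall n : nat, R (lo + n.+1%:Z) b <= R (lo + n%:Z) b + 1.
  move=> n; have := ga01 (lo + n.+1%:Z) b; rewrite /ga.
  have -> : lo + n.+1%:Z - 1 = lo + n%:Z by lia'.
  lia'.
have hl : forall n : nat, n%:Z + (d + lo - b - gg) <= R (lo + n%:Z) b.
  by move=> n; have := R_riem (lo + n%:Z) b; lia'.
have [N [e1 e2]] := eventually2 (f := fun n => R (lo + n%:Z) b) hs hl.
set a := lo + N.+2%:Z.
have g1 : ga a b = 1.
  rewrite /ga /a; move: e2 => /=; have -> : lo + N.+2%:Z - 1 = lo + N.+1%:Z by lia'.
  lia'.
have g2 : ga (a - 1) b = 1.
  rewrite /ga /a; move: e1 => /=.
  have -> : lo + N.+2%:Z - 1 = lo + N.+1%:Z by lia'.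
  have -> : lo + N.+1%:Z - 1 = lo + N%:Z by lia'.
  lia'.
have hh : ha a b = 1.
  have := ga_ha a b; have := ha01 a b; have := ha01 a (b + 1); rewrite g1 g2; lia'.
have [x [x0 x1]] := thresh (phi := fun a => ha a b) (lo := lo) (hi := a) ltac:(rewrite /a; lia') hlo hh (fun x : int => ha01 x b).
by exists x; apply/eqP; apply/Dl1_ha.
Qed.

Lemma ex_row a : exists b, Dl a b == 1.
Proof.
set b0 := a + d + 1.
have hlo : ga a b0 = 0.
  rewrite /ga !R_neg //; rewrite /b0; lia'.
have hs : forall n : nat, R a (b0 - n.+1%:Z) <= R a (b0 - n%:Z) + 1.
  move=> n; have := ha01 a (b0 - n.+1%:Z); rewrite /ha.
  have -> : b0 - n.+1%:Z + 1 = b0 - n%:Z by lia'.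
  lia'.
have hl : forall n : nat, n%:Z + (d + a - b0 - gg) <= R a (b0 - n%:Z).
  by move=> n; have := R_riem a (b0 - n%:Z); lia'.
have [N [e1 e2]] := eventually2 (f := fun n => R a (b0 - n%:Z)) hs hl.
set b := b0 - N.+2%:Z.
have h1 : ha a b = 1.
  rewrite /ha /b; move: e2 => /=; have -> : b0 - N.+2%:Z + 1 = b0 - N.+1%:Z by lia'.
  lia'.
have h2 : ha a (b + 1) = 1.
  rewrite /ha /b; move: e1 => /=.
  have -> : b0 - N.+2%:Z + 1 = b0 - N.+1%:Z by lia'.
  have -> : b0 - N.+1%:Z + 1 = b0 - N%:Z by lia'.
  lia'.
have gg1 : ga a b = 1.
  have := ga_ha a b; have := ga01 a b; have := ga01 (a - 1) b; rewrite h1 h2; lia'.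
have hm : forall x : int, (fun x : int => ga a (- x)) (x - 1) <= (fun x : int => ga a (- x)) x.
  move=> x /=; have := ga_mono a (- x); by have -> : - x + 1 = - (x - 1) by lia'.
have [x [x0 x1]] := thresh (phi := fun x : int => ga a (- x)) (lo := - b0) (hi := - b)
   ltac:(rewrite /b; lia') ltac:(by rewrite /= opprK) ltac:(by rewrite /= opprK) (fun x : int => ga01 a (- x)).
exists (- x); apply/eqP; apply/Dl1_ga; split => //.
by move: x0; have -> : - (x - 1) = - x + 1 by lia'.
Qed.

Definition tau b := xchoose (ex_col b).
Definition sig a := xchoose (ex_row a).
Lemma tauP b : Dl (tau b) b = 1.
Proof. by apply/eqP; apply: (xchooseP (ex_col b)). Qed.
Lemma sigP a : Dl a (sig a) = 1.
Proof. by apply/eqP; apply: (xchooseP (ex_row a)). Qed.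
Lemma tau_uniq a b : Dl a b = 1 -> a = tau b.
Proof.
move=> /Dl1_ha [h0 h1]; have /Dl1_ha [t0 t1] := tauP b.
exact: (thresh_uniq (phi := fun a => ha a b) (ha_mono b)).
Qed.
Lemma sig_uniq a b : Dl a b = 1 -> b = sig a.
Proof.
move=> /Dl1_ga [h0 h1]; have /Dl1_ga [t0 t1] := sigP a.
have hm : forall x : int, (fun x : int => ga a (- x)) (x - 1) <= (fun x : int => ga a (- x)) x.
  move=> x /=; have := ga_mono a (- x); by have -> : - x + 1 = - (x - 1) by lia'.
have e : - b = - sig a.
  apply: (thresh_uniq hm) => /=; rewrite ?opprK //.
  - by have -> : - (- b - 1) = b + 1 by lia'.
  - by have -> : - (- sig a - 1) = sig a + 1 by lia'.
by move: e; lia'.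
Qed.

Lemma tau_perm : is_transmission_perm m u v D tau.
Proof.
split.
  exists sig => [b|a]; [exact/esym/sig_uniq/tauP | exact/esym/tau_uniq/sigP].
move=> a b; rewrite -/(Dab a b) Delta_R -/(Dl a b).
case: (eqVneq (tau b) a) => [<-|ne]; first by rewrite tauP.
have : Dl a b != 1 by apply/eqP => /tau_uniq e; rewrite e eqxx in ne.
have := Dl_ge0 a b; have := Dl_le1 a b; move=> h1 h2 /eqP h3; change (Posz 0 = Dl a b); move: h1 h2 h3; lia'.
Qed.


Ltac gen_tr ::= repeat match goal with
  | |- context [R ?a ?b] => gen_one (R a b)
  | |- context [ha ?a ?b] => gen_one (ha a b)
  | |- context [ga ?a ?b] => gen_one (ga a b)
  | |- context [Dl ?a ?b] => gen_one (Dl a b)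
  | |- context [tau ?b] => gen_one (tau b)
  end.

Lemma tau_per b : tau (b + 2) = tau b + 2.
Proof. by apply/esym/tau_uniq; rewrite Dl_per tauP. Qed.

Lemma tau_shift_nat (n : nat) b : tau (b + 2 * n%:Z) = tau b + 2 * n%:Z /\
  tau (b - 2 * n%:Z) = tau b - 2 * n%:Z.
Proof.
elim: n b => [|n IH] b; first by rewrite mulr0 addr0 subr0.
split.
  have -> : b + 2 * n.+1%:Z = (b + 2 * n%:Z) + 2 by lia'.
  rewrite tau_per (IH b).1; lia'.
have e := tau_per (b - 2 * n.+1%:Z).
have e' : b - 2 * n.+1%:Z + 2 = b - 2 * n%:Z by lia'.
move: e; rewrite e' (IH b).2; lia'.
Qed.

Lemma tau_per_int (i : int) b : tau (b + 2 * i) = tau b + 2 * i.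
Proof.
case: (lerP 0 i) => hi.
  have [n ->] : exists n : nat, i = n%:Z by exists `|i|%N; lia'.
  exact: (tau_shift_nat n b).1.
have [n e] : exists n : nat, i = - n%:Z by exists `|i|%N; lia'.
have := (tau_shift_nat n b).2; rewrite e; have -> : b + 2 * - n%:Z = b - 2 * n%:Z by lia'.
move=> ->; lia'.
Qed.

Lemma tau_lb b : b - d <= tau b.
Proof.
have /Dl1_ha [_ h1] := tauP b.
case: (ltrP (d + tau b - b) 0) => h; last by lia'.
move: h1; rewrite /ha R_neg //; have := R_m1 (tau b) (b + 1); lia'.
Qed.

Lemma tau_gap b : tau b - tau (b + 1) <= 2 * gg.
Proof.
set A := tau b - 1.
have hA : ha A b = 0 by have /Dl1_ha [h0 _] := tauP b.
have step : forall n : nat, R (A - 2 * n%:Z) b <= R (A - 2 * n.+1%:Z) b + 1.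
  move=> n.
  have h1 : ha (A - 2 * n%:Z) b = 0.
    have := mono_int (phi := fun a => ha a b) (ha_mono b) (x := A - 2 * n%:Z) (y := A) ltac:(lia').
    have := ha01 (A - 2 * n%:Z) b; rewrite /= hA; lia'.
  have h2 := ha01 (A - 2 * n%:Z) (b + 1).
  have e : R (A - 2 * n%:Z) (b + 1 + 1) = R (A - 2 * n.+1%:Z) b.
    rewrite -[RHS]R_per; congr (R _ _); lia'.
  move: h1 h2 e; rewrite /ha; lia'.
have chain : forall n : nat, R A b <= R (A - 2 * n%:Z) b + n%:Z.
  elim=> [|n IH]; first by rewrite mulr0 subr0 addr0.
  have := step n; move: IH; lia'.
have hl := tau_lb (b + 1).
have hg := genus_ge0.
case: (ltrP (d + A - b) 0) => hK.
  rewrite /A in hK; move: hl hg hK; lia'.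
set n := ((absz ((d + A - b)%R)) %/ 2).+1.
have hc := chain n.
have hneg : R (A - 2 * n%:Z) b = -1.
  apply: R_neg; rewrite /n; lia'.
have hr := R_riem A b.
move: hc hneg hr hl hg hK; rewrite /n /A; lia'.
Qed.

Definition invb (p : int * int) : bool := (p.1 < p.2) && (tau p.2 < tau p.1).

Lemma inv_bound : inv_k_le 2 tau gg.
Proof.
set Nb := `|tau 0 - tau 1|%N.
set f0 := fun k : nat => (0 : int, 2 * k%:Z + 1).
set f1 := fun k : nat => (1 : int, 2 * k%:Z + 2).
exists (filter invb (map f0 (iota 0 Nb) ++ map f1 (iota 0 Nb))).
have t1 : forall k : nat, tau (2 * k%:Z + 1) = tau 1 + 2 * k%:Z.
  by move=> k; rewrite -tau_per_int addrC.
have t2 : forall k : nat, tau (2 * k%:Z + 2) = tau 0 + 2 * k%:Z + 2.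
  move=> k; have -> : 2 * k%:Z + 2 = 0 + 2 * (k%:Z + 1) by lia'.
  rewrite tau_per_int; lia'.
have g0 := tau_gap 0; have g1 := tau_gap 1.
have e2 : tau (1 + 1) = tau 0 + 2 by rewrite -tau_per.
rewrite e2 in g1.
have hg := genus_ge0.
split; [|split].
- rewrite size_filter count_cat !count_map.
  case: (ltrP (tau 1) (tau 0)) => h10.
    have c0 : (count (preim f0 invb) (iota 0 Nb) <= `|gg|)%N.
      apply: count_bound => k; rewrite /preim /invb /f0 /= t1; move: g0 hg; lia'.
    have c1 : (count (preim f1 invb) (iota 0 Nb) <= 0)%N.
      apply: count_bound => k; rewrite /preim /invb /f1 /= t2; move: h10; lia'.
    exact: comb1 c0 c1 hg.
  have c0 : (count (preim f0 invb) (iota 0 Nb) <= 0)%N.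
    apply: count_bound => k; rewrite /preim /invb /f0 /= t1; move: h10; lia'.
  have c1 : (count (preim f1 invb) (iota 0 Nb) <= `|gg|)%N.
    apply: count_bound => k; rewrite /preim /invb /f1 /= t2; move: g1 hg; lia'.
  by rewrite addnC; exact: comb1 c1 c0 hg.
- by move=> p; rewrite mem_filter => /andP [/andP [h1 h2] _].
move=> [p1 p2] [/= h12 ht]; move: h12 ht.
have [i1 [e1 [-> he1]]] := decomp2 p1.
have [i2 [e2' [-> he2]]] := decomp2 p2.
rewrite !tau_per_int.
case: he1 => -> ; case: he2 => -> h12 ht.
- move: h12 ht; lia'.
-
  have [k hk] : exists k : nat, i2 - i1 = k%:Z by exists `|i2 - i1|%N; move: h12; lia'.
  exists (f0 k).
    rewrite mem_filter mem_cat; apply/andP; split.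
      rewrite /invb /f0 /= t1; move: ht hk; lia'.
    apply/orP; left; apply: map_f; rewrite mem_iota add0n /Nb; move: ht hk; lia'.
  rewrite /k_equiv /f0 /=; split; first by move: hk; lia'.
  by apply/dvdzP; exists i1; rewrite subr0 add0r mulrC.
-
  have [k hk] : exists k : nat, i2 - i1 - 1 = k%:Z by exists (absz ((i2 - i1 - 1)%R)); move: h12; lia'.
  exists (f1 k).
    rewrite mem_filter mem_cat; apply/andP; split.
      rewrite /invb /f1 /= t2; move: ht hk; lia'.
    apply/orP; right; apply: map_f; rewrite mem_iota add0n /Nb; move: ht hk; lia'.
  rewrite /k_equiv /f1 /=; split; first by move: hk; lia'.
  by apply/dvdzP; exists i1; rewrite addrC addKr mulrC.
- move: h12 ht; lia'.
Qed.

End Trans.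

End Main.

Theorem mainTheorem12 (V : finType) (m : V -> V -> nat) (u v : V) :
  is_graph m ->
  torsion_order m u v 2 ->
  (forall D : {ffun V -> int}, submodular m u v D) ->
  general_transmission m u v 2.
Proof.
move=> [msym mloop mconn] [_ htor _] hsub.
split => // D.
exists (tau msym mloop u mconn htor D); split.
- exact: tau_perm.
- exact: inv_bound.
Qed.
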